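(* There exists a unique bilinear pairing $\langle-,-\rangle:\mathcal{H}\times\mathcal{H}\to K$ such that: (1) $\langle 1,x\rangle=\varepsilon(x)$ for all $x\in\mathcal{H}$; (2) $\langle xy,z\rangle=\langle y\otimes x,\Delta(z)\rangle$ for all $x,y,z\in\mathcal{H}$, where $\langle a\otimes b,c\otimes d\rangle=\langle a,c\rangle\langle b,d\rangle$; (3) $\langle B^+(x),y\rangle=\langle x,\gamma(y)\rangle$ for all $x,y\in\mathcal{H}$. Moreover: (4) $\langle-,-\rangle$ is symmetric and non-degenerate; (5) if $x,y$ are homogeneous of different weights then $\langle x,y\rangle=0$; (6) $\langle S(x),y\rangle=\langle x,S(y)\rangle$ for all $x,y\in\mathcal{H}$, where $S$ is the antipode of $\mathcal{H}$.
   Context: Let $K$ be a field. Planar rooted trees have their children linearly ordered left to right; a planar forest is a finite, possibly empty, sequence $t_1\cdots t_n$ of planar rooted trees ($1$ = empty forest); the weight of a forest is its number of vertices. $\mathcal{H}$ is the free associative unital $K$-algebra on planar rooted trees, with basis the planar forests and product concatenation, graded by weight. $B^+(F)$ is the tree obtained by grafting the trees of $F$ (in order) on a new common root. $\varepsilon(F)=\delta_{F,1}$. $\Delta$ is the unique linear map with $\Delta(1)=1\otimes1$, $\Delta(xy)=(x\otimes1)\Delta(y)+\Delta(x)(1\otimes y)-x\otimes y$, $\Delta(B^+(x))=B^+(x)\otimes 1+(\mathrm{Id}\otimes B^+)\Delta(x)$; with it $\mathcal{H}$ is an infinitesimal Hopf algebra, whose antipode $S$ is the inverse of $\mathrm{Id}$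 for the convolution $f\star g=m\circ(f\otimes g)\circ\Delta$. The linear map $\gamma:\mathcal{H}\to\mathcal{H}$ is defined on forests by $\gamma(t_1\cdots t_n)=\delta_{t_1,\bullet}\,t_2\cdots t_n$ (where $\bullet$ is the one-vertex tree) and $\gamma(1)=0$. *)

(* Defs.v *)
From HB Require Import structures.
From mathcomp Require Import all_boot all_order all_algebra.
From mathcomp Require Import finmap.
From mathcomp.multinomials Require Import monalg.
Set Implicit Arguments. Unset Strict Implicit. Unset Printing Implicit Defensive.
Import GRing.Theory.
Local Open Scope ring_scope.

(* A planar rooted tree is a root together with the (ordered) list of
   the subtrees grafted on it: [Node F] is B^+(F). *)
Inductive ptree : Type := Node of seq ptree.

Fixpoint ptree_enc (t : ptree) : GenTree.tree unit :=
  let: Node ts := t in GenTree.Node 0 (map ptree_enc ts).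
Fixpoint ptree_dec (g : GenTree.tree unit) : ptree :=
  match g with
  | GenTree.Leaf _ => Node [::]
  | GenTree.Node _ gs => Node (map ptree_dec gs)
  end.
Fixpoint ptree_encK (t : ptree) : ptree_dec (ptree_enc t) = t :=
  match t return ptree_dec (ptree_enc t) = t with
  | Node ts => f_equal Node
      ((fix aux (ts : seq ptree) : map ptree_dec (map ptree_enc ts) = ts :=
          match ts with
          | [::] => erefl
          | t :: ts' => f_equal2 cons (ptree_encK t) (aux ts')
          end) ts)
  end.
HB.instance Definition _ := Countable.copy ptree (can_type ptree_encK).

Definition forest := seq ptree.
HB.instance Definition _ := Countable.on forest.
Lemma forest_unitm (x y : forest) : x ++ y = [::] -> x = [::] /\ y = [::].
Proof. by case: x. Qed.
HB.instance Definition _ := Choice_isMonomialDef.Build forest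
  (@catA ptree) (@cat0s ptree) (@cats0 ptree) forest_unitm.

Fixpoint tweight (t : ptree) : nat :=
  let: Node ts := t in (sumn (map tweight ts)).+1.
Definition fweight (F : forest) : nat := sumn (map tweight F).

Definition dot : ptree := Node [::].

(* H = free associative unital K-algebra on planar trees: basis the planar
   forests, product = concatenation (monoid algebra of the forest monoid). *)
Definition H (K : fieldType) := {malg K[forest]}.
(* H (x) H, with basis the pairs of forests, F (x) G  <->  (F, G) *)
Definition H2 (K : fieldType) := {malg K[(forest * forest)%type]}.

Section Ops.
Variable K : fieldType.

Definition linext (V : lmodType K) (f : forest -> V) (h : H K) : V :=
  \sum_(F <- msupp h) h@_F *: f F.

Definition eps (h : H K) : K := h@_[::].

Definition Bp (h : H K) : H K := linext (fun F => << [:: Node F] >> : H K) h.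

Definition gamma_basis (F : forest) : H K :=
  match F with
  | [::] => 0
  | t :: F' => if t == dot then << F' >> else 0
  end.
Definition gam (h : H K) : H K := linext gamma_basis h.

Definition mapk (f : forest * forest -> forest * forest) (u : H2 K) : H2 K :=
  \sum_(k <- msupp u) << u@_k *g f k >>.

(* the coproduct on basis elements, by the defining recursion:
   Delta(1) = 1(x)1,
   Delta(t F) = (t(x)1) Delta(F) + Delta(t) (1(x)F) - t (x) F,
   Delta(B^+(G)) = B^+(G)(x)1 + (Id (x) B^+) Delta(G). *)
Fixpoint delta_tree (t : ptree) : H2 K :=
  let: Node G := t in
  let fix delta_for (G : seq ptree) : H2 K :=
    match G with
    | [::] => << ([::], [::]) >>
    | s :: G' =>
        mapk (fun k => (s :: k.1, k.2)) (delta_for G')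
      + mapk (fun k => (k.1, k.2 ++ G')) (delta_tree s)
      - << ([:: s], G') >>
    end in
  << ([:: Node G], [::]) >> + mapk (fun k => (k.1, [:: Node k.2])) (delta_for G).

Fixpoint delta_forest (G : forest) : H2 K :=
  match G with
  | [::] => << ([::], [::]) >>
  | s :: G' =>
      mapk (fun k => (s :: k.1, k.2)) (delta_forest G')
    + mapk (fun k => (k.1, k.2 ++ G')) (delta_tree s)
    - << ([:: s], G') >>
  end.

Definition Delta (h : H K) : H2 K := linext delta_forest h.

Definition tens (a b : H K) : H2 K :=
  \sum_(F <- msupp a) \sum_(G <- msupp b) << a@_F * b@_G *g (F, G) >>.

Definition conv (f g : H K -> H K) (h : H K) : H K :=
  \sum_(k <- msupp (Delta h))
     (Delta h)@_k *: (f << k.1 >> * g << k.2 >>).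

Definition is_antipode (S : H K -> H K) : Prop :=
  (forall h, conv S id h = eps h *: 1) /\ (forall h, conv id S h = eps h *: 1).

(* a bilinear pairing H x H -> K is determined by its values p F G on
   pairs of basis forests; pairH p is its bilinear extension *)
Definition pairH (p : forest -> forest -> K) (x y : H K) : K :=
  \sum_(F <- msupp x) \sum_(G <- msupp y) x@_F * y@_G * p F G.

Definition pairH2 (p : forest -> forest -> K) (u v : H2 K) : K :=
  \sum_(k <- msupp u) \sum_(l <- msupp v)
     u@_k * v@_l * (p k.1 l.1 * p k.2 l.2).

Definition pairing_axioms (p : forest -> forest -> K) : Prop :=
  [/\ (forall x : H K, pairH p 1 x = eps x),
      (forall x y z : H K, pairH p (x * y) z = pairH2 p (tens y x) (Delta z))
    & (forall x y : H K, pairH p (Bp x) y = pairH p x (gam y))].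

Definition homogeneous (n : nat) (x : H K) : Prop :=
  forall F, F \in msupp x -> fweight F = n.

End Ops.

(* Main.v *)
Require Import Defs.
From HB Require Import structures.
From mathcomp Require Import all_boot all_order all_algebra.
From mathcomp Require Import finmap.
From mathcomp.multinomials Require Import monalg.
Set Implicit Arguments. Unset Strict Implicit. Unset Printing Implicit Defensive.
Import GRing.Theory.
Local Open Scope fset_scope.
Local Open Scope ring_scope.
From mathcomp Require Import ring.
From mathcomp Require Import zify.

Definition ev (K : fieldType) (T : choiceType) (h : T -> K) (u : {malg K[T]}) : K :=
  \sum_(k <- msupp u) u@_k * h k.

Lemma evEw (K : fieldType) (T : choiceType) (h : T -> K) (u : {malg K[T]}) (d : {fset T}) :
  msupp u `<=` d -> ev h u = \sum_(k <- d) u@_k * h k.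
Proof.
move=> le; rewrite /ev [LHS](big_fset_incl _ le) => //= x xd /mcoeff_outdom ->.
by rewrite mul0r.
Qed.

Lemma evD (K : fieldType) (T : choiceType) (h : T -> K) (u v : {malg K[T]}) :
  ev h (u + v) = ev h u + ev h v.
Proof.
have le1 : msupp u `<=` msupp u `|` msupp v by apply: fsubsetUl.
have le2 : msupp v `<=` msupp u `|` msupp v by apply: fsubsetUr.
rewrite (evEw _ (msuppD_le u v)) (evEw _ le1) (evEw _ le2) -big_split /=.
by apply: eq_bigr => k _; rewrite mcoeffD mulrDl.
Qed.

Lemma evZ (K : fieldType) (T : choiceType) (h : T -> K) (c : K) (u : {malg K[T]}) :
  ev h (c *: u) = c * ev h u.
Proof.
rewrite (evEw _ (msuppZ_le c u)) /ev big_distrr /=.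
by apply: eq_bigr => k _; rewrite mcoeffZ mulrA.
Qed.

Lemma ev0 (K : fieldType) (T : choiceType) (h : T -> K) : ev h 0 = 0.
Proof. by rewrite /ev msupp0 big_seq_fset0. Qed.

Lemma evN (K : fieldType) (T : choiceType) (h : T -> K) (u : {malg K[T]}) :
  ev h (- u) = - ev h u.
Proof. by rewrite -scaleN1r evZ mulN1r. Qed.

Lemma evB (K : fieldType) (T : choiceType) (h : T -> K) (u v : {malg K[T]}) :
  ev h (u - v) = ev h u - ev h v.
Proof. by rewrite evD evN. Qed.

Lemma ev_sum (K : fieldType) (T : choiceType) (h : T -> K) (I : Type) (r : seq I)
  (P : pred I) (F : I -> {malg K[T]}) :
  ev h (\sum_(i <- r | P i) F i) = \sum_(i <- r | P i) ev h (F i).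
Proof. by apply: (big_morph (ev h) (@evD K T h) (ev0 h)). Qed.

Lemma evU (K : fieldType) (T : choiceType) (h : T -> K) (c : K) (k : T) :
  ev h << c *g k >> = c * h k.
Proof. by rewrite (evEw _ msuppU_le) big_seq_fset1 mcoeffUU. Qed.

Lemma ev1 (K : fieldType) (T : choiceType) (h : T -> K) (k : T) :
  ev h << k >> = h k.
Proof. by rewrite evU mul1r. Qed.

Lemma ev_ext (K : fieldType) (T : choiceType) (h h' : T -> K) (u : {malg K[T]}) :
  (forall k, h k = h' k) -> ev h u = ev h' u.
Proof. by move=> e; apply: eq_bigr => k _; rewrite e. Qed.

Lemma ev_ext_in (K : fieldType) (T : choiceType) (h h' : T -> K) (u : {malg K[T]}) :
  (forall k, k \in msupp u -> h k = h' k) -> ev h u = ev h' u.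
Proof. by move=> e; rewrite /ev !big_seq; apply: eq_bigr => k kin; rewrite e. Qed.

Lemma evhD (K : fieldType) (T : choiceType) (h1 h2 : T -> K) (u : {malg K[T]}) :
  ev (fun k => h1 k + h2 k) u = ev h1 u + ev h2 u.
Proof. by rewrite /ev -big_split; apply: eq_bigr => k _; rewrite mulrDr. Qed.

Lemma evhZ (K : fieldType) (T : choiceType) (c : K) (h : T -> K) (u : {malg K[T]}) :
  ev (fun k => c * h k) u = c * ev h u.
Proof. by rewrite /ev big_distrr; apply: eq_bigr => k _; rewrite mulrCA. Qed.

Lemma evhN (K : fieldType) (T : choiceType) (h : T -> K) (u : {malg K[T]}) :
  ev (fun k => - h k) u = - ev h u.
Proof. by rewrite -mulN1r -evhZ; apply: ev_ext => k; rewrite mulN1r. Qed.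

Lemma evhB (K : fieldType) (T : choiceType) (h1 h2 : T -> K) (u : {malg K[T]}) :
  ev (fun k => h1 k - h2 k) u = ev h1 u - ev h2 u.
Proof. by rewrite evhD evhN. Qed.

Lemma evh0 (K : fieldType) (T : choiceType) (u : {malg K[T]}) :
  ev (fun _ => 0) u = 0.
Proof. by rewrite /ev big1 // => k _; rewrite mulr0. Qed.

Lemma evh_sum (K : fieldType) (T : choiceType) (I : Type) (r : seq I) (P : pred I)
  (f : I -> T -> K) (u : {malg K[T]}) :
  ev (fun k => \sum_(i <- r | P i) f i k) u = \sum_(i <- r | P i) ev (f i) u.
Proof.
rewrite /ev (exchange_big) /=; apply: eq_bigr => k _; by rewrite mulr_sumr.
Qed.

Lemma ev_exch (K : fieldType) (T U : choiceType) (f : T -> U -> K)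
   (u : {malg K[T]}) (v : {malg K[U]}) :
  ev (fun k => ev (fun l => f k l) v) u = ev (fun l => ev (fun k => f k l) u) v.
Proof.
rewrite /ev; under eq_bigr do rewrite big_distrr.
rewrite exchange_big /=; apply: eq_bigr => l _; rewrite big_distrr /=.
by apply: eq_bigr => k _; rewrite mulrCA.
Qed.

Lemma ev_coef (K : fieldType) (T : choiceType) (a : T) (u : {malg K[T]}) :
  ev (fun k => (k == a)%:R) u = u@_a.
Proof.
have le : msupp u `<=` msupp u `|` [fset a] by apply: fsubsetUl.
rewrite (evEw _ le).
rewrite (big_fsetD1 a) /=; last by rewrite in_fsetU in_fset1 eqxx orbT.
rewrite eqxx mulr1 big1_fset ?addr0 // => k; rewrite in_fsetD1 => /andP [/negbTE -> _] _.
by rewrite mulr0.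
Qed.

Lemma ev_linext (K : fieldType) (T : choiceType) (f : forest -> {malg K[T]})
   (h : T -> K) (x : H K) :
  ev h (linext f x) = ev (fun F => ev h (f F)) x.
Proof. by rewrite /linext ev_sum; apply: eq_bigr => F _; rewrite evZ. Qed.

Lemma linextU (K : fieldType) (V : lmodType K) (f : forest -> V) (F : forest) :
  linext f (<< F >> : H K) = f F.
Proof. by rewrite /linext msuppU1 big_seq_fset1 mcoeffUU scale1r. Qed.

Lemma ev_mul (K : fieldType) (h : forest -> K) (x y : H K) :
  ev h (x * y) = ev (fun X => ev (fun Y => h (X ++ Y)) y) x.
Proof.
rewrite malgME (@ev_sum K forest).
transitivity (\sum_(X <- msupp x) x@_X * ev (fun Y => h (X ++ Y)) y); last by [].
apply: eq_bigr => X _; rewrite (@ev_sum K forest).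
transitivity (\sum_(Y <- msupp y) x@_X * (y@_Y * h (X ++ Y))); last by rewrite big_distrr.
by apply: eq_bigr => Y _; rewrite (evU (T:=forest)) mulrA.
Qed.

Lemma pairHE (K : fieldType) (p : forest -> forest -> K) (x y : H K) :
  pairH p x y = ev (fun F => ev (fun G => p F G) y) x.
Proof.
rewrite /pairH /ev; apply: eq_bigr => F _; rewrite big_distrr /=.
by apply eq_bigr => G _; rewrite mulrA.
Qed.

Lemma pairH2E (K : fieldType) (p : forest -> forest -> K) (u v : H2 K) :
  pairH2 p u v = ev (fun k => ev (fun l => p k.1 l.1 * p k.2 l.2) v) u.
Proof.
rewrite /pairH2 /ev; apply eq_bigr => F _; rewrite big_distrr /=.
apply eq_bigr => G _. by rewrite [RHS]mulrA.
Qed.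

Lemma ev_tens (K : fieldType) (h : forest * forest -> K) (a b : H K) :
  ev h (tens a b) = ev (fun F => ev (fun G => h (F, G)) b) a.
Proof.
rewrite /tens (@ev_sum K (forest * forest)%type).
transitivity (\sum_(F <- msupp a) a@_F * ev (fun G => h (F, G)) b); last by [].
apply: eq_bigr => F _; rewrite (@ev_sum K (forest * forest)%type).
transitivity (\sum_(G <- msupp b) a@_F * (b@_G * h (F, G))); last by rewrite big_distrr.
by apply: eq_bigr => G _; rewrite evU mulrA.
Qed.

Lemma ev_mapk (K : fieldType) (h : forest * forest -> K) f (u : H2 K) :
  ev h (mapk f u) = ev (fun k => h (f k)) u.
Proof.
rewrite /mapk (@ev_sum K (forest * forest)%type).
by apply: eq_bigr => k _; rewrite evU.
Qed.

Lemma forest_ind2 (P : forest -> Prop) :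
  P [::] -> (forall S G, P S -> P G -> P (Node S :: G)) -> forall G, P G.
Proof.
move=> P0 PS.
pose IHt := fix IHt (t : ptree) : forall G, P G -> P (t :: G) :=
  match t with
  | Node S0 => fun G PG => PS S0 G ((fix IHl (l : seq ptree) : P l :=
       match l with [::] => P0 | u :: l' => IHt u l' (IHl l') end) S0) PG
  end.
exact (fix IHl (l : seq ptree) : P l :=
       match l with [::] => P0 | u :: l' => IHt u l' (IHl l') end).
Qed.

Definition dv (K : fieldType) (G : forest) (h : forest -> forest -> K) : K :=
  ev (fun k => h k.1 k.2) (delta_forest K G).
Definition dt (K : fieldType) (t : ptree) (h : forest -> forest -> K) : K :=
  ev (fun k => h k.1 k.2) (delta_tree K t).

Lemma delta_treeE (K : fieldType) (G : forest) :
  delta_tree K (Node G) =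
  << ([:: Node G], [::]) >> + mapk (fun k => (k.1, [:: Node k.2])) (delta_forest K G).
Proof. rewrite /=; congr (_ + mapk _ _); by elim: G => //= s G ->. Qed.

Lemma dv0 (K : fieldType) (h : forest -> forest -> K) : dv [::] h = h [::] [::].
Proof. by rewrite /dv /= ev1. Qed.

Lemma dvS (K : fieldType) (s : ptree) (G : forest) (h : forest -> forest -> K) :
  dv (s :: G) h = dv G (fun a b => h (s :: a) b) + dt s (fun a b => h a (b ++ G)) - h [:: s] G.
Proof. by rewrite /dv /= evB evD !ev_mapk ev1. Qed.

Lemma dtN (K : fieldType) (G : forest) (h : forest -> forest -> K) :
  dt (Node G) h = h [:: Node G] [::] + dv G (fun a b => h a [:: Node b]).
Proof. by rewrite /dt delta_treeE evD ev1 ev_mapk. Qed.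

Lemma dv_ext (K : fieldType) G (h h' : forest -> forest -> K) :
  (forall a b, h a b = h' a b) -> dv G h = dv G h'.
Proof. by move=> e; apply: ev_ext => k; rewrite e. Qed.
Lemma dt_ext (K : fieldType) t (h h' : forest -> forest -> K) :
  (forall a b, h a b = h' a b) -> dt t h = dt t h'.
Proof. by move=> e; apply: ev_ext => k; rewrite e. Qed.

Lemma dvhD (K : fieldType) G (h1 h2 : forest -> forest -> K) :
  dv G (fun a b => h1 a b + h2 a b) = dv G h1 + dv G h2.
Proof. exact: evhD. Qed.
Lemma dvhB (K : fieldType) G (h1 h2 : forest -> forest -> K) :
  dv G (fun a b => h1 a b - h2 a b) = dv G h1 - dv G h2.
Proof. exact: evhB. Qed.
Lemma dvhZ (K : fieldType) G (c : K) (h : forest -> forest -> K) :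
  dv G (fun a b => c * h a b) = c * dv G h.
Proof. exact: evhZ. Qed.
Lemma dvh0 (K : fieldType) G : dv G (fun _ _ => 0 : K) = 0.
Proof. exact: evh0. Qed.
Lemma dtS (K : fieldType) t (h : forest -> forest -> K) :
  dt t h = dv [:: t] h.
Proof.
rewrite dvS dv0 addrAC subrr add0r; apply: dt_ext => a b; by rewrite cats0.
Qed.

Lemma dv_rc (K : fieldType) G (f : forest -> K) :
  dv G (fun a b => (b == [::])%:R * f a) = f G.
Proof.
elim: G f => [|[S] G IH] f; first by rewrite dv0 mul1r.
rewrite dvS (IH (fun a => f (Node S :: a))) dtN /=.
rewrite (@dv_ext K _ _ (fun a b => 0 * f a)); last by move=> a b; rewrite /= mul0r.
rewrite dvhZ mul0r addr0.
by rewrite addrK.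
Qed.

Lemma dv_lc (K : fieldType) G (f : forest -> K) :
  dv G (fun a b => (a == [::])%:R * f b) = f G.
Proof.
elim/forest_ind2: G f => [|S G IHS IHG] f; first by rewrite dv0 mul1r.
rewrite dvS (@dv_ext K _ _ (fun a b => 0 * f b)); last by move=> a b; rewrite /= mul0r.
rewrite dvhZ mul0r add0r dtN /= mul0r add0r subr0.
by rewrite (IHS (fun b => f (Node b :: G))).
Qed.

Definition gm (K : fieldType) (f : forest -> K) (b : forest) : K :=
  match b with Node [::] :: b' => f b' | _ => 0 end.

Fixpoint ppt (K : fieldType) (t : ptree) : (forest -> K) -> forest -> K :=
  match t with
  | Node T => fun pF G => dv G (fun a b => pF a * gm ((fix ppl (l : seq ptree) : forest -> K :=
       match l with [::] => fun G => (G == [::])%:R | u :: l' => ppt u (ppl l') end) T) b)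
  end.
Definition pp (K : fieldType) : forest -> forest -> K :=
  fix ppl (l : seq ptree) : forest -> K :=
       match l with [::] => fun G => (G == [::])%:R | u :: l' => ppt u (ppl l') end.

Lemma pp0 (K : fieldType) G : pp K [::] G = (G == [::])%:R.
Proof. by []. Qed.

Lemma ppN (K : fieldType) T F G :
  pp K (Node T :: F) G = dv G (fun a b => pp K F a * gm (pp K T) b).
Proof. by []. Qed.

Lemma gm0 (K : fieldType) (f : forest -> K) : gm f [::] = 0.
Proof. by []. Qed.

Lemma gm_ext (K : fieldType) (f g : forest -> K) b : (forall c, f c = g c) -> gm f b = gm g b.
Proof. by move=> e; case: b => [|[[|? ?]] ?] //=. Qed.

Lemma dvMr (K : fieldType) G (h : forest -> forest -> K) c :
  dv G h * c = dv G (fun a b => h a b * c).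
Proof. by rewrite mulrC -dvhZ; apply: dv_ext => a b; rewrite mulrC. Qed.

Lemma dvMl (K : fieldType) G (h : forest -> forest -> K) c :
  c * dv G h = dv G (fun a b => c * h a b).
Proof. by rewrite -dvhZ. Qed.

Lemma dv_exch (K : fieldType) G1 G2 (f : forest -> forest -> forest -> forest -> K) :
  dv G1 (fun a b => dv G2 (fun c d => f a b c d)) = dv G2 (fun c d => dv G1 (fun a b => f a b c d)).
Proof. exact: (ev_exch (fun k l => f k.1 k.2 l.1 l.2)). Qed.

Lemma dvC (K : fieldType) G (c : K) : dv G (fun _ _ => c) = c * dv G (fun _ _ => 1).
Proof. by rewrite -dvhZ; apply: dv_ext => a b; rewrite mulr1. Qed.

Lemma ppg (K : fieldType) T G : pp K [:: Node T] G = gm (pp K T) G.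
Proof. by rewrite ppN (dv_lc G (gm (pp K T))). Qed.

Lemma pp_split (K : fieldType) t F G :
  pp K (t :: F) G = dv G (fun a b => pp K F a * pp K [:: t] b).
Proof. case: t => T; rewrite ppN; apply: dv_ext => a b; by rewrite ppg. Qed.

Lemma ppR1 (K : fieldType) G : pp K G [::] = (G == [::])%:R.
Proof. case: G => [|[T] F] //; by rewrite ppN dv0 gm0 mulr0. Qed.

Lemma ppR3 (K : fieldType) Y X : pp K Y [:: Node X] = gm (fun Y' => pp K Y' X) Y.
Proof.
case: Y => [|[T] F] //; rewrite ppN -dtS dtN gm0 mulr0 add0r.
rewrite (@dv_ext K _ _ (fun a b => (b == [::])%:R * ((T == [::])%:R * pp K F a))).
  rewrite dv_rc; by case: T => [|u T] /=; rewrite ?mul1r ?mul0r.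
move=> a b; case: b => [|u b] /=; last by rewrite !mulr0 mul0r.
by rewrite ppR1 mul1r mulrC.
Qed.

Lemma dv_cat (K : fieldType) X Y (h : forest -> forest -> K) :
  dv (X ++ Y) h = dv Y (fun a b => h (X ++ a) b) + dv X (fun a b => h a (b ++ Y)) - h X Y.
Proof.
elim: X h => [|s X IH] h /=.
  by rewrite dv0 /= addrK.
rewrite dvS IH dvS.
have -> : dt s (fun a b => h a (b ++ X ++ Y)) = dt s (fun a b => h a ((b ++ X) ++ Y)).
  by apply: dt_ext => a b; rewrite catA.
ring.
Qed.

Lemma ppR2 (K : fieldType) Z : forall X Y,
  pp K Z (X ++ Y) = dv Z (fun a b => pp K a Y * pp K b X).
Proof.
elim/forest_ind2: Z => [|T F IHT IHF] X Y.
  rewrite pp0 dv0 !pp0.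
  by case: X => [|x X]; case: Y => [|y Y]; rewrite ?mulr1 ?mul0r ?mulr0.
have R2t : forall X0 Y0, pp K [:: Node T] (X0 ++ Y0) =
    dv [:: Node T] (fun a b => pp K a Y0 * pp K b X0).
  move=> X0 Y0; rewrite ppg -dtS dtN pp0 ppg.
  case: X0 => [|[S] X0].
    rewrite cat0s eqxx mulr1 (@dv_ext K _ _ (fun _ _ => 0)) ?dvh0 ?addr0 //.
    by move=> a b; rewrite ppg gm0 mulr0.
  rewrite mulr0 add0r cat_cons.
  case: S => [|u S].
    rewrite [LHS]/= IHT; apply: dv_ext => a b; by rewrite ppg.
  rewrite [LHS]/= (@dv_ext K _ _ (fun _ _ => 0)) ?dvh0 //.
  by move=> a b; rewrite ppg /= mulr0.
rewrite pp_split dv_cat dvS dtN cat0s.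
have E1 : dv Y (fun a b => pp K F (X ++ a) * pp K [:: Node T] b) =
          dv F (fun a b => pp K (Node T :: a) Y * pp K b X).
  transitivity (dv Y (fun c d => dv F (fun a b => pp K a c * pp K b X * pp K [:: Node T] d))).
    by apply: dv_ext => c d; rewrite IHF dvMr.
  rewrite dv_exch; apply: dv_ext => a b; rewrite pp_split dvMr; apply: dv_ext => c d; ring.
have E2 : dv X (fun a b => pp K F a * pp K [:: Node T] (b ++ Y)) =
   pp K [:: Node T] Y * pp K F X + dv T (fun a b => pp K a Y * pp K ([:: Node b] ++ F) X).
  transitivity (dv X (fun a b => (b == [::])%:R * (pp K [:: Node T] Y * pp K F a)) +
     dv X (fun a b => dv T (fun c d => pp K F a * (pp K c Y * pp K [:: Node d] b)))).
    rewrite -dvhD; apply: dv_ext => a b; rewrite R2t -dtS dtN pp0 mulrDr dvMl; ring.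
  rewrite dv_rc dv_exch; congr (_ + _); apply: dv_ext => c d.
  rewrite cat1s pp_split dvMl; apply: dv_ext => a b; ring.
rewrite E1 E2; ring.
Qed.

Lemma pp_sym (K : fieldType) F G : pp K F G = pp K G F.
Proof.
elim/forest_ind2: F G => [|T F IHT IHF] G.
  by rewrite pp0 ppR1.
rewrite ppN -cat1s ppR2; apply: dv_ext => a b.
rewrite IHF ppR3; congr (_ * _); apply: gm_ext => c; by rewrite IHT.
Qed.

Lemma ppA2 (K : fieldType) X Y Z :
  pp K (X ++ Y) Z = dv Z (fun a b => pp K Y a * pp K X b).
Proof. rewrite pp_sym ppR2; apply: dv_ext => a b; by rewrite !(pp_sym K _ a) (pp_sym K _ b). Qed.

Lemma fwcons s a : fweight (s :: a) = tweight s + fweight a.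
Proof. by []. Qed.
Lemma twN S : tweight (Node S) = (fweight S).+1.
Proof. by []. Qed.
Lemma fwnil : fweight [::] = 0.
Proof. by []. Qed.
Lemma fwcat a b : fweight (a ++ b) = fweight a + fweight b.
Proof. by rewrite /fweight map_cat sumn_cat. Qed.
Lemma fw0 a : fweight a = 0 -> a = [::].
Proof. by case: a => // [[S]] a; rewrite fwcons twN. Qed.

Lemma dv_wext (K : fieldType) G (h h' : forest -> forest -> K) :
  (forall a b, fweight a + fweight b = fweight G -> h a b = h' a b) -> dv G h = dv G h'.
Proof.
elim/forest_ind2: G h h' => [|S G IHS IHG] h h' e.
  by rewrite !dv0 e.
rewrite !dvS !dtN.
rewrite (IHG _ (fun a b => h' (Node S :: a) b)); last first.
  by move=> a b eab; apply: e; rewrite !fwcons; lia.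
rewrite (IHS _ (fun a b => h' a ([:: Node b] ++ G) )); last first.
  move=> a b eab; apply: e.
  rewrite cat1s !fwcons !twN; lia.
rewrite cat0s !e // !fwcons ?fwnil; lia.
Qed.

Lemma pp_w (K : fieldType) F G : fweight F <> fweight G -> pp K F G = 0.
Proof.
elim/forest_ind2: F G => [|T F IHT IHF] G ne.
  rewrite pp0; case: G ne => // t G; by rewrite fwnil.
rewrite ppN -(dvh0 K G); apply: dv_wext => a b eab.
have [ea|nea] := eqVneq (fweight F) (fweight a); last by rewrite IHF ?mul0r //; apply/eqP.
case: b eab => [|[[|u B]] b] eab; rewrite ?gm0 ?mulr0 //=.
rewrite IHT ?mulr0 //.
move: ne eab; rewrite !fwcons !twN fwnil; lia.
Qed.

Definition gsum (K : fieldType) (G : forest) (h : forest -> forest -> K) : K :=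
  \sum_(i < size G) match nth dot G i with Node Ti => h (take i G ++ Ti) (drop i.+1 G) end.

Lemma gsum_nil (K : fieldType) (h : forest -> forest -> K) : gsum [::] h = 0.
Proof. by rewrite /gsum big_ord0. Qed.

Lemma gsum_cons (K : fieldType) S G (h : forest -> forest -> K) :
  gsum (Node S :: G) h = h S G + gsum G (fun a b => h (Node S :: a) b).
Proof.
by rewrite /gsum /= big_ord_recl /= drop0.
Qed.

Lemma dv_gm (K : fieldType) G (h : forest -> forest -> K) :
  dv G (fun a b => gm (h a) b) = gsum G h.
Proof.
elim: G h => [|[S] G IH] h; first by rewrite dv0 gm0 gsum_nil.
rewrite dvS IH dtN gsum_cons cat0s.
rewrite (@dv_ext K _ _ (fun a b => (b == [::])%:R * h a G)); last first.
  by move=> a b; case: b => [|u b] /=; rewrite ?mul1r ?mul0r.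
rewrite dv_rc; ring.
Qed.

Lemma pp_gsum (K : fieldType) T F G :
  pp K (Node T :: F) G = gsum G (fun a b => pp K F a * pp K T b).
Proof.
rewrite ppN -dv_gm; apply: dv_ext => a b.
by case: b => [|[[|u B]] b] /=; rewrite ?mulr0.
Qed.

Fixpoint PL (K : fieldType) (L Gs : seq forest) : K :=
  match L, Gs with
  | [::], [::] => 1
  | F :: L', G :: Gs' => pp K F G * PL K L' Gs'
  | _, _ => 0
  end.

Lemma PLcons (K : fieldType) F L' G Gs' : PL K (F :: L') (G :: Gs') = pp K F G * PL K L' Gs'.
Proof. by []. Qed.

Fixpoint mu (L : seq forest) : nat :=
  match L with [::] => 0 | F :: L' => 2 * fweight F + 1 + mu L' end.

Definition psi (K : fieldType) (L : seq forest) (A B : forest) (Gs' : seq forest) : K :=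
  match L with (Node T :: F') :: L' => pp K F' A * pp K T B * PL K L' Gs' | _ => 0 end.

Definition isplit (L : seq forest) : bool :=
  match L with (_ :: _) :: _ => true | _ => false end.
Definition isz (L : seq forest) : bool :=
  match L with [::] :: _ => true | _ => false end.
Definition phi1 (L : seq forest) : seq forest :=
  match L with (Node T :: F') :: L' => F' :: T :: L' | _ => L end.
Definition c1 (K : fieldType) (c : seq forest -> K) (L : seq forest) : K :=
  match L with F' :: T :: L' => c ((Node T :: F') :: L') | _ => 0 end.

Lemma gsum_ext (K : fieldType) G (h h' : forest -> forest -> K) :
  (forall a b, h a b = h' a b) -> gsum G h = gsum G h'.
Proof. by move=> e; apply: eq_bigr => i _; case: (nth dot G i) => Ti; rewrite e. Qed.

Lemma gsum0f (K : fieldType) G : gsum G (fun _ _ => 0 : K) = 0.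
Proof. by apply: big1 => i _; case: (nth dot G i). Qed.

Lemma gsumMl (K : fieldType) G (h : forest -> forest -> K) c :
  c * gsum G h = gsum G (fun a b => c * h a b).
Proof. by rewrite /gsum big_distrr; apply: eq_bigr => i _; case: (nth dot G i). Qed.

Lemma gsumMr (K : fieldType) G (h : forest -> forest -> K) c :
  gsum G h * c = gsum G (fun a b => h a b * c).
Proof. by rewrite /gsum big_distrl; apply: eq_bigr => i _; case: (nth dot G i). Qed.

Lemma gsumD (K : fieldType) G (h1 h2 : forest -> forest -> K) :
  gsum G (fun a b => h1 a b + h2 a b) = gsum G h1 + gsum G h2.
Proof. by rewrite /gsum -big_split; apply: eq_bigr => i _; case: (nth dot G i). Qed.

Lemma gsum_sum (K : fieldType) G (I : Type) (r : seq I) (f : I -> forest -> forest -> K) :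
  gsum G (fun a b => \sum_(i <- r) f i a b) = \sum_(i <- r) gsum G (f i).
Proof.
rewrite /gsum exchange_big; apply: eq_bigr => i _; case: (nth dot G i) => Ti.
by [].
Qed.

Lemma gsum_small (K : fieldType) G (h : forest -> forest -> K) :
  (forall a b, (size b < size G)%N -> h a b = 0) -> gsum G h = 0.
Proof.
move=> e; apply: big1 => i _; case: (nth dot G i) => Ti; apply: e.
by rewrite size_drop; have := ltn_ord i; lia.
Qed.

Lemma nd_main (K : fieldType) n : forall (S : seq (seq forest)) (c : seq forest -> K),
  uniq S -> (forall L, L \in S -> (mu L < n)%N) -> (forall L, c L != 0 -> L \in S) ->
  (forall Gs, \sum_(L <- S) c L * PL K L Gs = 0) -> forall L, c L = 0.
Proof.
elim: n => [|n IH] S c uS muS supS rad.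
  by move=> L; apply/eqP/negPn/negP => /supS /muS; rewrite ltn0.
pose Psi A B Gs' := \sum_(L0 <- S) c L0 * psi K L0 A B Gs'.
have radP : forall A B Gs', Psi A B Gs' + gsum B (fun a b => Psi (Node A :: a) b Gs') = 0.
  move=> A B Gs'; rewrite -(rad ((Node A :: B) :: Gs')) /Psi gsum_sum -big_split /=.
  apply: eq_bigr => L0 _; rewrite -gsumMl -mulrDr; congr (_ * _).
  case: L0 => [|[|[T] F'] L']; first by rewrite /= gsum0f addr0.
    by rewrite /= gsum0f addr0 mul0r.
  rewrite PLcons pp_gsum gsum_cons mulrDl gsumMr /psi; congr (_ + _).
have Psi0 : forall m B, (size B <= m)%N -> forall A Gs', Psi A B Gs' = 0.
  elim=> [|m IHm] B szB A Gs'; move: (radP A B Gs'); rewrite gsum_small ?addr0 //.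
    by move=> a b; lia.
  by move=> a b lt; apply: IHm; lia.
have c1z : forall L0, c1 c L0 = 0.
  apply: (IH (map phi1 [seq L0 <- S | isplit L0])).
  - rewrite map_inj_in_uniq ?filter_uniq // => x y; rewrite !mem_filter.
    case: x => [|[|[T] F'] L'] //; case: y => [|[|[T2] F2] L2] //= _ _.
    by case=> -> -> ->.
  - move=> L0 /mapP [L1]; rewrite mem_filter => /andP [sp inS] ->.
    have := muS _ inS; case: L1 sp inS => [|[|[T] F'] L'] //= _ _.
    rewrite !fwcons twN; lia.
  - case=> [|F' [|T L']] /=; rewrite ?eqxx // => nz.
    apply/mapP; exists ((Node T :: F') :: L') => //.
    by rewrite mem_filter /=; apply: supS.
  - move=> Gs; rewrite big_map big_filter.
    case: Gs => [|A [|B Gs']].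
    + rewrite big1 // => L0 sp; case: L0 sp => [|[|[T] F'] L'] //= _; by rewrite mulr0.
    + rewrite big1 // => L0 sp; case: L0 sp => [|[|[T] F'] L'] //= _; by rewrite !mulr0.
    + transitivity (Psi A B Gs'); last exact: (Psi0 (size B) B (leqnn _) A Gs').
      rewrite /Psi big_mkcond /=.
      apply: eq_bigr => L0 _; case: L0 => [|[|[T] F'] L'] /=; rewrite ?mulr0 //.
      by congr (_ * _); rewrite mulrA.
have csplit : forall T F' L', c ((Node T :: F') :: L') = 0.
  by move=> T F' L'; exact: (c1z (F' :: T :: L')).
have c0z : forall L', c ([::] :: L') = 0.
  apply: (IH (map behead [seq L0 <- S | isz L0]) (fun L' => c ([::] :: L'))).
  - rewrite map_inj_in_uniq ?filter_uniq // => x y; rewrite !mem_filter.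
    case: x => [|[|? ?] L'] //; case: y => [|[|? ?] L2] //= _ _.
    by move=> ->.
  - move=> L0 /mapP [L1]; rewrite mem_filter => /andP [sp inS] ->.
    have := muS _ inS; case: L1 sp inS => [|[|? ?] L'] //= _ _.
  - move=> L' nz; apply/mapP; exists ([::] :: L') => //.
    by rewrite mem_filter /=; apply: supS.
  - move=> Gs'; rewrite big_map big_filter.
    transitivity (\sum_(L <- S) c L * PL K L ([::] :: Gs')); last exact: rad.
    rewrite big_mkcond /=.
    apply: eq_bigr => L0 _; case: L0 => [|[|[T] F'] L'].
    + by rewrite /= mulr0.
    + by rewrite PLcons pp0 eqxx mul1r.
    + by rewrite csplit mul0r.
case=> [|[|[T] F'] L']; [|exact: c0z|exact: csplit].
have [inS|ninS] := boolP ([::] \in S); last first.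
  by apply/eqP/negPn/negP => /supS; rewrite (negbTE ninS).
move: (rad [::]); rewrite (bigD1_seq [::]) //= mulr1 big1 ?addr0 // => L0 ne.
case: L0 ne => [|[|[T] F'] L'] //= _; by rewrite mulr0.
Qed.

Lemma evHa (K : fieldType) (h : forest -> K) (F : forest) : @ev K forest h << F >> = h F.
Proof. exact: ev1. Qed.
Lemma evHb (K : fieldType) (h : forest -> K) (F : forest) :
  @ev K (forest : choiceType) h << F >> = h F.
Proof. exact: ev1. Qed.
Definition evsE := (evHa, evHb).

Lemma malgU_scale (K : fieldType) (c : K) (F : forest) : << c *g F >> = c *: (<< F >> : H K).
Proof.
apply/malgP => k; rewrite mcoeffZ !mcoeffU.
by case: eqP => _; rewrite ?mulr1n ?mulr0n ?mulr1 ?mulr0.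
Qed.

Lemma ev_lin (K : fieldType) (S : {linear H K -> H K}) (h : forest -> K) (x : H K) :
  ev h (S x) = ev (fun F => ev h (S << F >>)) x.
Proof.
rewrite {1}(monalgE x) linear_sum (@ev_sum K forest).
transitivity (\sum_(F <- msupp x) x@_F * ev h (S << F >>)); last by [].
by apply: eq_bigr => F _; rewrite malgU_scale linearZ evZ.
Qed.

Lemma ev_one (K : fieldType) (h : forest -> K) : ev h (1 : H K) = h [::].
Proof. by rewrite -mpolyC1E evsE. Qed.

Lemma gammaE (K : fieldType) (h : forest -> K) G : ev h (gamma_basis K G) = gm h G.
Proof.
case: G => [|[[|u l]] G] /=; rewrite ?ev0 //; first by rewrite evsE.
have -> : (Node (u :: l) == dot) = false by apply/negbTE/eqP => -[].
by rewrite ev0.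
Qed.

Lemma epsU (K : fieldType) G : eps (<< G >> : H K) = (G == [::])%:R.
Proof. by rewrite /eps mcoeffU. Qed.

Lemma ev_Delta (K : fieldType) (h : forest * forest -> K) (z : H K) :
  ev h (Delta z) = ev (fun Z => ev h (delta_forest K Z)) z.
Proof. by rewrite /Delta ev_linext. Qed.

Lemma DeltaU (K : fieldType) G : Delta (<< G >> : H K) = delta_forest K G.
Proof. by rewrite /Delta linextU. Qed.

Lemma pp_axioms (K : fieldType) : pairing_axioms (pp K).
Proof.
split.
- move=> x; rewrite pairHE ev_one.
  by rewrite (@ev_ext K _ _ (fun k => (k == [::])%:R)) ?ev_coef.
- move=> x y z; rewrite pairHE ev_mul pairH2E ev_tens [RHS]ev_exch.
  apply: ev_ext => X; apply: ev_ext => Y; rewrite ev_Delta.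
  by apply: ev_ext => Z; rewrite ppA2.
- move=> x y; rewrite !pairHE /Bp ev_linext; apply: ev_ext => F.
  rewrite evsE /gam ev_linext; apply: ev_ext => G.
  by rewrite gammaE ppg.
Qed.

Lemma pp_unique (K : fieldType) (q : forest -> forest -> K) :
  pairing_axioms q -> forall F G, q F G = pp K F G.
Proof.
case=> A1 A2 A3.
have q1 : forall G, q [::] G = (G == [::])%:R.
  by move=> G; have := A1 << G >>; rewrite pairHE ev_one evsE epsU.
have q3 : forall T b, q [:: Node T] b = gm (q T) b.
  move=> T b; have := A3 << T >> << b >>.
  by rewrite !pairHE /Bp linextU !evsE /gam linextU gammaE.
have q2 : forall X Y Z, q (X ++ Y) Z = dv Z (fun a b => q Y a * q X b).
  move=> X Y Z; have := A2 << X >> << Y >> << Z >>.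
  by rewrite pairHE ev_mul !evsE pairH2E ev_tens !evsE DeltaU.
elim/forest_ind2 => [|T F IHT IHF] G; first by rewrite q1 pp0.
rewrite -cat1s q2 cat1s ppN; apply: dv_ext => a b.
by rewrite IHF q3; congr (_ * _); apply: gm_ext.
Qed.

Lemma pairH_sym (K : fieldType) (x y : H K) : pairH (pp K) x y = pairH (pp K) y x.
Proof.
rewrite !pairHE ev_exch; apply: ev_ext => F; apply: ev_ext => G; exact: pp_sym.
Qed.

Lemma pp_homog (K : fieldType) n m (x y : H K) :
  n <> m -> homogeneous n x -> homogeneous m y -> pairH (pp K) x y = 0.
Proof.
move=> nm hx hy; rewrite /pairH big1_seq // => F /andP [_ Fin].
rewrite big1_seq // => G /andP [_ Gin].
by rewrite pp_w ?mulr0 // (hx F Fin) (hy G Gin).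
Qed.

Lemma pp_nondeg (K : fieldType) (x : H K) : (forall y, pairH (pp K) x y = 0) -> x = 0.
Proof.
move=> rad.
pose S := map (fun F => [:: F]) (msupp x).
pose c := fun L : seq forest => match L with [:: F] => x@_F | _ => 0 end.
have cz := @nd_main K (\max_(F <- msupp x) mu [:: F]).+1 S c.
apply/malgP => F; rewrite mcoeff0; apply: (cz _ _ _ _ [:: F]).
- by rewrite map_inj_uniq ?fset_uniq // => a b [].
- move=> L /mapP [G Gin ->]; rewrite ltnS.
  exact: (@leq_bigmax_seq _ _ xpredT (fun F => mu [:: F])).
- case=> [|G [|? ?]] /=; rewrite ?eqxx // => nz.
  by apply/mapP; exists G => //; rewrite -mcoeff_neq0.
- case=> [|G [|G' Gs]].
  + by rewrite big1 // => L _; case: L => [|? [|? ?]]; rewrite /= ?mulr0 ?mul0r.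
  + rewrite big_map; transitivity (pairH (pp K) x << G >>); last exact: rad.
    rewrite /pairH; apply: eq_bigr => F' _.
    by rewrite msuppU1 big_seq_fset1 mcoeffUU PLcons /= mulr1 mulr1.
  + rewrite big1 // => L _; case: L => [|? [|? ?]]; by rewrite /= ?mulr0 ?mul0r.
Qed.

Definition sig (K : fieldType) (S : {linear H K -> H K}) (F G : forest) : K :=
  ev (fun X => pp K X G) (S << F >>).

Lemma conv_ev (K : fieldType) (f g : H K -> H K) (h : forest -> K) (G : forest) :
  ev h (conv f g << G >>) = dv G (fun A B => ev h (f << A >> * g << B >>)).
Proof.
rewrite /conv DeltaU (@ev_sum K forest).
transitivity (\sum_(k <- msupp (delta_forest K G)) (delta_forest K G)@_k *
    ev h (f << k.1 >> * g << k.2 >>)); last by [].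
by apply: eq_bigr => k _; rewrite evZ.
Qed.

Lemma ev_dv_exch (K : fieldType) (u : H K) G (f : forest -> forest -> forest -> K) :
  ev (fun X => dv G (fun a b => f X a b)) u = dv G (fun a b => ev (fun X => f X a b) u).
Proof. exact: (ev_exch (fun X k => f X k.1 k.2)). Qed.

Lemma anti_A (K : fieldType) (S : {linear H K -> H K}) : is_antipode S ->
  forall F G, dv G (fun A B => dv F (fun a b => pp K a B * sig S A b)) =
              (F == [::])%:R * (G == [::])%:R.
Proof.
move=> aS F G; have E := congr1 (ev (pp K F)) (aS.1 << G >>).
rewrite conv_ev evZ ev_one epsU ppR1 mulrC in E; rewrite -E.
apply: dv_ext => A B; rewrite ev_mul.
rewrite (@ev_ext _ _ _ (fun X => dv F (fun a b => pp K a B * pp K b X))); last first.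
  by move=> X; rewrite evsE ppR2.
rewrite ev_dv_exch; apply: dv_ext => a b; rewrite evhZ /sig; congr (_ * _).
by apply: ev_ext => X; exact: pp_sym.
Qed.

Lemma anti_B (K : fieldType) (S : {linear H K -> H K}) : is_antipode S ->
  forall F G, dv F (fun a b => dv G (fun c d => sig S b c * pp K a d)) =
              (F == [::])%:R * (G == [::])%:R.
Proof.
move=> aS F G; have E := congr1 (ev (fun X => pp K X G)) (aS.2 << F >>).
rewrite conv_ev evZ ev_one epsU pp0 in E; rewrite -E.
apply: dv_ext => a b; rewrite ev_mul /= evsE.
rewrite (@ev_ext _ _ _ (fun Y => dv G (fun c d => pp K Y c * pp K a d))); last first.
  by move=> Y; rewrite ppA2.
rewrite ev_dv_exch; apply: dv_ext => c d; rewrite /sig.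
by rewrite mulrC -evhZ; apply: ev_ext => Y; rewrite mulrC.
Qed.

Lemma tw_pos t : (0 < tweight t)%N.
Proof. by case: t. Qed.

Lemma sig_sym (K : fieldType) (S : {linear H K -> H K}) : is_antipode S ->
  forall n F G, (fweight F + fweight G < n)%N -> sig S F G = sig S G F.
Proof.
move=> aS; elim=> // n IH F G lt.
have D : dv G (fun A B => dv F (fun a b => pp K a B * (sig S A b - sig S b A))) = 0.
  transitivity (dv G (fun A B => dv F (fun a b => pp K a B * sig S A b)) -
                dv G (fun A B => dv F (fun a b => sig S b A * pp K a B))).
    rewrite -dvhB; apply: dv_ext => A B; rewrite -dvhB; apply: dv_ext => a b; ring.
  by rewrite (anti_A aS) [X in _ - X]dv_exch (anti_B aS) subrr.
have D' : dv G (fun A B => (B == [::])%:R * (sig S A F - sig S F A)) = 0.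
  rewrite -D; apply: dv_wext => A B eAB.
  rewrite -(dv_lc F (fun b => (B == [::])%:R * (sig S A b - sig S b A))).
  apply: dv_wext => a b eab.
  case: a eab => [|t a] eab; first by rewrite eqxx mul1r pp0.
  have -> : (t :: a == [::]) = false by [].
  rewrite mul0r.
  have [ew|new] := eqVneq (fweight (t :: a)) (fweight B); last first.
    by rewrite pp_w ?mul0r //; apply/eqP.
  rewrite IH ?subrr ?mulr0 //.
  move: lt eab eAB ew; rewrite fwcons; have := tw_pos t; lia.
move: D'; rewrite (dv_rc G (fun A => sig S A F - sig S F A)).
by move/eqP; rewrite subr_eq0 => /eqP.
Qed.

Lemma pp_antipode (K : fieldType) (S : {linear H K -> H K}) : is_antipode S ->
  forall x y : H K, pairH (pp K) (S x) y = pairH (pp K) x (S y).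
Proof.
move=> aS x y; rewrite !pairHE ev_lin; apply: ev_ext => F0.
rewrite ev_exch ev_lin; apply: ev_ext => G.
transitivity (sig S F0 G); first by [].
rewrite (sig_sym aS (n := (fweight F0 + fweight G).+1)) //.
by rewrite /sig; apply: ev_ext => X; exact: pp_sym.
Qed.

Local Close Scope fset_scope.
Local Open Scope ring_scope.

Theorem theorem19 (K : fieldType) :
  exists p : forest -> forest -> K,
    (pairing_axioms p /\
     (forall q : forest -> forest -> K, pairing_axioms q ->
        forall F G : forest, q F G = p F G)) /\
    (forall x y : H K, pairH p x y = pairH p y x) /\
    (forall x : H K, (forall y : H K, pairH p x y = 0) -> x = 0) /\
    (forall y : H K, (forall x : H K, pairH p x y = 0) -> y = 0) /\
    (forall (n m : nat) (x y : H K), n <> m ->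
        homogeneous n x -> homogeneous m y -> pairH p x y = 0) /\
    (forall S : {linear H K -> H K}, is_antipode S ->
        forall x y : H K, pairH p (S x) y = pairH p x (S y)).
Proof.
exists (pp K); split.
  split; first exact: pp_axioms.
  by move=> q hq F G; apply: pp_unique.
split; first exact: pairH_sym.
split; first exact: pp_nondeg.
split; first by move=> y hy; apply: pp_nondeg => x; rewrite pairH_sym.
split; first exact: pp_homog.
exact: pp_antipode.
Qed.
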